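(* Suppose that $v_k\to\bar v\in\mathcal V$ as $k\to\infty$. Then $v_{k,\mu}\to\bar v$ as $k\to\infty$ for every $\mu\in\{0,\dots,L\}$.
   Context: Let $\mathcal V=\bigotimes_{\nu=1}^d\mathbb R^{m_\nu}\cong\mathbb R^N$ with the Euclidean inner product. Let $A\in\mathbb R^{N\times N}$ be symmetric positive definite, $b\in\mathcal V\setminus\{0\}$, $f(v)=\frac{1}{\|b\|^2}(\frac12\langle Av,v\rangle-\langle b,v\rangle)$. Let $L\ge d$, $P_1,\dots,P_L$ finite-dimensional real inner product spaces, $P=P_1\times\dots\times P_L$, $U:P\to\mathcal V$ multilinear. For $\mathbf p\in P$, $W_{\mu,\mathbf p^{[\mu]}}:P_\mu\to\mathcal V$ is $q\mapsto U(p_1,\dots,p_{\mu-1},q,p_{\mu+1},\dots,p_L)$; $X^T$ transpose, $X^+$ pseudoinverse. ALS: choose $\mathbf p_1=(p_1^1,\dots,p_L^1)\in P$; for $k=1,2,\dots$ and $\mu=1,\dots,L$ in order, $W_{k,\mu}:=W_{\mu,(p_1^{k+1},\dots,p_{\mu-1}^{k+1},p_{\mu+1}^k,\dots,p_L^k)}$ and $p_\mu^{k+1}:=(W_{k,\mu}^TAW_{k,\mu})^+W_{k,\mu}^Tb$. Put $v_k=U(p_1^k,\dots,p_L^k)$ and, for $\mu\in\{0,\dots,L\}$, $v_{k,\mu}=U(p_1^{k+1},\dots,p_\mu^{k+1},p_{\mu+1}^k,\dots,p_L^k)$. *)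

(* Defs.v *)
From HB Require Import structures.
From mathcomp Require Import all_boot all_order all_algebra.
From mathcomp Require Import all_classical all_reals all_analysis.
Set Implicit Arguments. Unset Strict Implicit. Unset Printing Implicit Defensive.
Import Order.TTheory GRing.Theory Num.Theory.
Import numFieldTopology.Exports numFieldNormedType.Exports.
Local Open Scope ring_scope.

Section ALS.
Variable R : realType.

(* Moore-Penrose pseudoinverse, defined by the four Penrose conditions
   (it exists and is unique; xget picks it). *)
Definition penrose (k : nat) (M X : 'M[R]_k) : Prop :=
  [/\ M *m X *m M = M, X *m M *m X = X,
      (M *m X)^T = M *m X & (X *m M)^T = X *m M].

Definition pinv (k : nat) (M : 'M[R]_k) : 'M[R]_k :=
  xget 0 [set X | penrose M X]%classic.

Variables (L N : nat) (n : 'I_L -> nat).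
Definition alspoint := forall mu : 'I_L, 'cV[R]_(n mu).

Definition upd (p : alspoint) (mu : 'I_L) (q : 'cV[R]_(n mu)) : alspoint :=
  @dfwith _ (fun i => 'cV[R]_(n i)) p mu q.

Definition multilinear (U : alspoint -> 'cV[R]_N) : Prop :=
  forall (p : alspoint) (mu : 'I_L) (a : R) (q1 q2 : 'cV[R]_(n mu)),
    U (upd p (a *: q1 + q2)) = a *: U (upd p q1) + U (upd p q2).

(* matrix of W_{mu, p^[mu]} : q |-> U(p_1,..,q,..,p_L) in the standard bases *)
Definition Wmx (U : alspoint -> 'cV[R]_N) (p : alspoint) (mu : 'I_L)
  : 'M[R]_(N, n mu) :=
  \matrix_(i, j) U (upd p (delta_mx j 0 : 'cV[R]_(n mu))) i 0.

Definition als_update (U : alspoint -> 'cV[R]_N) (A : 'M[R]_N) (b : 'cV[R]_N)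
  (p : alspoint) (mu : 'I_L) : alspoint :=
  let W := Wmx U p mu in upd p (pinv (W^T *m A *m W) *m W^T *m b).

Definition als_partial U A b (p : alspoint) (m : nat) : alspoint :=
  foldl (als_update U A b) p (take m (enum 'I_L)).

Definition als_sweep U A b (p : alspoint) : alspoint := als_partial U A b p L.

(* iterate (index shifted: als_iter .. k = paper's p_{k+1}) *)
Definition als_iter U A b (p1 : alspoint) (k : nat) : alspoint :=
  iter k (als_sweep U A b) p1.

End ALS.

(* Main.v *)
From HB Require Import structures.
From mathcomp Require Import all_boot all_order all_algebra.
From mathcomp Require Import all_classical all_reals all_analysis.
From mathcomp Require Import ring lra.
Require Import Defs.
Import Order.TTheory GRing.Theory Num.Theory.
Import numFieldTopology.Exports numFieldNormedType.Exports.
Set Implicit Arguments. Unset Strict Implicit. Unset Printing Implicit Defensive.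
Local Open Scope ring_scope.
Local Open Scope classical_set_scope.

Lemma rv_sq_eq0 (R : realFieldType) k (w : 'rV[R]_k) : w *m w^T = 0 -> w = 0.
Proof.
move=> /matrixP /(_ 0 0); rewrite !mxE => /eqP.
rewrite psumr_eq0 => [/allP H|i _]; last by rewrite mxE -expr2 sqr_ge0.
apply/matrixP => i j; rewrite (ord1 i) mxE.
have := H j; rewrite mem_index_enum mxE -expr2 sqrf_eq0 => /(_ isT) /eqP //.
Qed.

Lemma penrose_from (R : realType) k r (M : 'M[R]_k) (Bt : 'M[R]_(r, k)) (R0 : 'M[R]_(k, r)) (S : 'M[R]_r) :
  M = Bt^T *m S *m Bt -> Bt *m R0 = 1%:M -> R0 *m Bt = (R0 *m Bt)^T -> S \in unitmx ->
  penrose M (R0 *m invmx S *m R0^T).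
Proof.
move=> hMS BR0 Xr Su.
have MX : M *m (R0 *m invmx S *m R0^T) = Bt^T *m R0^T.
  by rewrite hMS -!mulmxA (mulmxA Bt) BR0 mul1mx (mulmxA S) mulmxV // mul1mx.
have XM : (R0 *m invmx S *m R0^T) *m M = R0 *m Bt.
  rewrite hMS !mulmxA -(mulmxA _ R0^T) -trmx_mul BR0 trmx1 mulmx1.
  by rewrite -(mulmxA _ _ S) mulVmx // mulmx1.
split.
- by rewrite MX hMS !mulmxA -(mulmxA _ R0^T) -trmx_mul BR0 trmx1 mulmx1.
- by rewrite XM !mulmxA -(mulmxA _ Bt) BR0 mulmx1.
- by rewrite MX -trmx_mul -Xr.
- by rewrite XM -Xr.
Qed.


Lemma sym_penrose_ex (R : realType) k (M : 'M[R]_k) : M^T = M -> exists X, penrose M X.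
Proof.
move=> Msym.
set Bt := row_base M.
set G := Bt *m Bt^T.
have Gsym : G^T = G by rewrite /G trmx_mul trmxK.
have Gu : G \in unitmx.
  rewrite unitmxE unitfE; apply/negP => /det0P [v vn0 vG].
  have : (v *m Bt) *m (v *m Bt)^T = 0.
    by rewrite trmx_mul mulmxA -(mulmxA v) -/G vG mul0mx.
  move/rv_sq_eq0/eqP; rewrite mulmx_free_eq0 ?row_base_free //.
  by apply/negP.
set R0 := Bt^T *m invmx G.
have BR0 : Bt *m R0 = 1%:M by rewrite /R0 mulmxA -/G mulmxV.
have R0T : R0^T = invmx G *m Bt by rewrite /R0 trmx_mul trmx_inv Gsym trmxK.
set C := M *m pinvmx Bt.
have hM : M = C *m Bt by rewrite /C mulmxKpV // eq_row_base.
set S := C^T *m R0.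
have hMS : M = Bt^T *m S *m Bt.
  have -> : Bt^T *m S = C.
    rewrite /S mulmxA -trmx_mul -hM Msym.
    have -> : M *m R0 = C *m Bt *m R0 by rewrite -hM.
    by rewrite -mulmxA BR0 mulmx1.
  exact: hM.
have Su : S \in unitmx.
  rewrite -row_free_unit /row_free eqn_leq rank_leq_row /=.
  have := mxrankM_maxl (Bt^T *m S) Bt; rewrite -hMS => h1.
  exact: leq_trans h1 (mxrankM_maxr _ _).
have Xr : R0 *m Bt = (R0 *m Bt)^T by rewrite trmx_mul R0T [RHS]mulmxA; reflexivity.
exists (R0 *m invmx S *m R0^T).
exact: penrose_from hMS BR0 Xr Su.
Qed.

Lemma pinv_penrose (R : realType) k (M : 'M[R]_k) : M^T = M -> penrose M (pinv M).
Proof.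
move=> /sym_penrose_ex [X hX]; rewrite /pinv.
by apply: (@xgetPex _ 0 [set X | penrose M X]%classic); exists X.
Qed.

Definition PD (R : realType) N (A : 'M[R]_N) :=
  forall x : 'cV[R]_N, x != 0 -> 0 < (x^T *m A *m x) 0 0.

Lemma PD_mx0 (R : realType) N k (A : 'M[R]_N) (Y : 'M[R]_(N, k)) :
  PD A -> Y^T *m A *m Y = 0 -> Y = 0.
Proof.
move=> hA hY; apply/matrixP => i j.
have hc : col j Y = 0.
  apply/eqP; apply/negPn/negP => /hA.
  have -> : (col j Y)^T *m A *m col j Y = col j (row j (Y^T *m A *m Y)).
    by rewrite tr_col -row_mul (colE j Y) mulmxA -row_mul -colE.
  by rewrite hY !mxE ltxx.
by move/matrixP: hc => /(_ i 0); rewrite !mxE.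
Qed.

Lemma pinv_range (R : realType) N k (A : 'M[R]_N) (W : 'M[R]_(N, k)) :
  A^T = A -> PD A ->
  (W^T *m A *m W) *m pinv (W^T *m A *m W) *m W^T = W^T.
Proof.
move=> As hA.
set M := W^T *m A *m W.
have Ms : M^T = M by rewrite /M !trmx_mul trmxK As mulmxA.
have [h1 h2 h3 h4] := pinv_penrose Ms.
set X := pinv M in h1 h2 h3 h4 *.
set E := 1%:M - M *m X.
have Es : E^T = E by rewrite /E linearB /= trmx1 h3.
have EM : E *m M = 0 by rewrite /E mulmxBl mul1mx h1 subrr.
have hY : (W *m E)^T *m A *m (W *m E) = 0.
  have -> : (W *m E)^T *m A *m (W *m E) = E *m M *m E by rewrite trmx_mul Es /M !mulmxA.
  by rewrite EM mul0mx.
have := PD_mx0 hA hY; rewrite /E mulmxBr mulmx1 => /eqP; rewrite subr_eq0 => /eqP hW.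
by rewrite {2}hW trmx_mul h3.
Qed.

Lemma upd_id (R : realType) L (n : 'I_L -> nat) (p : alspoint R n) mu :
  upd p (p mu) = p.
Proof.
apply: functional_extensionality_dep => j; rewrite /upd.
by case: (eqVneq mu j) => [->|ne]; [apply: dfwith_in | apply: dfwith_out].
Qed.

Lemma upd_upd (R : realType) L (n : 'I_L -> nat) (p : alspoint R n) mu (q q' : 'cV[R]_(n mu)) :
  upd (upd p q) q' = upd p q'.
Proof.
apply: functional_extensionality_dep => j; rewrite /upd.
case: (eqVneq mu j) => [<-|ne].
  by etransitivity; [apply: dfwith_in | symmetry; apply: dfwith_in].
etransitivity; first exact: dfwith_out.
etransitivity; first exact: dfwith_out.
symmetry; exact: dfwith_out.
Qed.

Lemma U_lin (R : realType) L N (n : 'I_L -> nat) (U : alspoint R n -> 'cV[R]_N)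
  (p : alspoint R n) mu (q : 'cV[R]_(n mu)) :
  multilinear U -> U (upd p q) = Wmx U p mu *m q.
Proof.
move=> hU.
have U0 : U (upd p (0 : 'cV[R]_(n mu))) = 0.
  have h := hU p mu 1 0 0; rewrite scaler0 addr0 scale1r in h.
  by apply: (addrI (U (@upd _ _ _ p mu 0))); rewrite addr0 -h.
have hs : forall (r : seq 'I_(n mu)) (c : 'I_(n mu) -> R),
    U (upd p (\sum_(j <- r) c j *: (delta_mx j 0 : 'cV[R]_(n mu)))) =
    \sum_(j <- r) c j *: U (upd p (delta_mx j 0 : 'cV[R]_(n mu))).
  move=> r c; elim: r => [|j r IH]; first by rewrite !big_nil.
  by rewrite !big_cons hU IH.
have hq : q = \sum_(j < n mu) q j 0 *: (delta_mx j 0 : 'cV[R]_(n mu)).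
  rewrite {1}(matrix_sum_delta q).
  by apply: eq_bigr => j _; rewrite big_ord1.
rewrite {1}hq hs; apply/matrixP => i k; rewrite (ord1 k) summxE !mxE.
by apply: eq_bigr => j _; rewrite !mxE mulrC.
Qed.

Definition Qf (R : realType) N (A : 'M[R]_N) (x : 'cV[R]_N) := (x^T *m A *m x) 0 0.
Definition Fq (R : realType) N (A : 'M[R]_N) (b : 'cV[R]_N) (x : 'cV[R]_N) :=
  Qf A x / 2 - (b^T *m x) 0 0.

Lemma cross_term (R : realType) N k (A : 'M[R]_N) (W : 'M[R]_(N, k)) (b : 'cV[R]_N) (z q : 'cV[R]_k) :
  A^T = A -> (W^T *m A *m W) *m z = W^T *m b ->
  (W *m z)^T *m A *m (W *m q) = b^T *m (W *m q).
Proof.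
move=> As hz.
have -> : (W *m z)^T *m A *m (W *m q) = ((W^T *m A *m W) *m z)^T *m q.
  by rewrite !trmx_mul !trmxK As !mulmxA.
by rewrite hz trmx_mul trmxK mulmxA.
Qed.

Lemma quad_id (R : realType) N k (A : 'M[R]_N) (W : 'M[R]_(N, k)) (b : 'cV[R]_N) (z q : 'cV[R]_k) :
  A^T = A -> (W^T *m A *m W) *m z = W^T *m b ->
  Fq A b (W *m q) - Fq A b (W *m z) = Qf A (W *m q - W *m z) / 2.
Proof.
move=> As hz.
have h1 := cross_term q As hz.
have h2 := cross_term z As hz.
have sym : forall u v : 'cV[R]_N, (u^T *m A *m v) 0 0 = (v^T *m A *m u) 0 0.
  move=> u v.
  have e : (u^T *m A *m v)^T = v^T *m A *m u by rewrite !trmx_mul trmxK As mulmxA.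
  by rewrite -e [RHS]mxE.
have ent : forall X Y : 'M[R]_1, (X - Y) 0 0 = X 0 0 - Y 0 0 by move=> X Y; rewrite !mxE.
rewrite /Fq /Qf [(W *m q - W *m z)^T]linearB /= !(mulmxBl, mulmxBr) !ent.
rewrite (sym (W *m q) (W *m z)) h1 h2.
lra.
Qed.

Lemma step_dec (R : realType) L N (n : 'I_L -> nat) (U : alspoint R n -> 'cV[R]_N)
  (A : 'M[R]_N) (b : 'cV[R]_N) (p : alspoint R n) mu :
  multilinear U -> A^T = A -> PD A ->
  Fq A b (U p) - Fq A b (U (als_update U A b p mu)) =
  Qf A (U p - U (als_update U A b p mu)) / 2.
Proof.
move=> hU As hA.
rewrite /als_update /=.
set W := Wmx U p mu.
set z := pinv (W^T *m A *m W) *m W^T *m b.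
have e1 : U p = W *m p mu.
  rewrite -{1}(upd_id p mu) U_lin //.
have e2 : U (upd p z) = W *m z by rewrite U_lin.
rewrite e1 e2 quad_id //.
by rewrite /z !mulmxA pinv_range.
Qed.

Lemma Qf_ge0 (R : realType) N (A : 'M[R]_N) x : PD A -> 0 <= Qf A x.
Proof.
move=> hA; have [->|nz] := eqVneq x 0.
  by rewrite /Qf mulmx0 mxE.
exact/ltW/hA.
Qed.
Lemma cvg_mx_entries (R : realType) m n (u : nat -> 'M[R]_(m, n)) (l : 'M[R]_(m, n)) :
  (forall i j, (fun k => u k i j) @ \oo --> l i j) -> u @ \oo --> l.
Proof.
move=> h; apply/cvgrPdist_lt => e e0.
have : \forall k \near \oo, forall ij : 'I_m * 'I_n, `|l ij.1 ij.2 - u k ij.1 ij.2| < e.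
  apply: filter_forall => -[i j]; by move/cvgrPdist_lt: (h i j) => /(_ e e0).
apply: filterS => k hk.
rewrite [ltLHS]/Num.Def.normr/= mx_normrE.
apply: bigmax_lt => // ij _; rewrite !mxE; exact: hk.
Qed.

Lemma cvg_entry (R : realType) m n (u : nat -> 'M[R]_(m, n)) (l : 'M[R]_(m, n)) i j :
  u @ \oo --> l -> (fun k => u k i j) @ \oo --> l i j.
Proof.
move=> h; exact: (@cvg_comp _ _ _ u _ _ _ _ h (@coord_continuous R m n i j l)).
Qed.

Lemma cvg_sumR (R : realType) (I : Type) (r : seq I) (u : I -> nat -> R) (l : I -> R) :
  (forall i, u i @ \oo --> l i) ->
  (fun k => \sum_(i <- r) u i k) @ \oo --> \sum_(i <- r) l i.
Proof.
move=> h; elim: r => [|j r IH].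
  rewrite big_nil; under eq_fun do rewrite big_nil; exact: cvg_cst.
rewrite big_cons; under eq_fun do rewrite big_cons.
exact: cvgD.
Qed.

Lemma cvg_mulmx (R : realType) m n p (u : nat -> 'M[R]_(m, n)) (w : nat -> 'M[R]_(n, p)) (v : 'M[R]_(m, n)) (z : 'M[R]_(n, p)) :
  u @ \oo --> v -> w @ \oo --> z -> (fun k => u k *m w k) @ \oo --> v *m z.
Proof.
move=> hu hw; apply: cvg_mx_entries => i j.
under eq_fun do rewrite mxE.
rewrite mxE; apply: cvg_sumR => l; apply: cvgM; exact: cvg_entry.
Qed.

Lemma cvg_trmx (R : realType) m n (u : nat -> 'M[R]_(m, n)) (v : 'M[R]_(m, n)) :
  u @ \oo --> v -> (fun k => (u k)^T) @ \oo --> v^T.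
Proof.
move=> hu; apply: cvg_mx_entries => i j.
under eq_fun do rewrite mxE.
rewrite mxE; exact: cvg_entry.
Qed.

Lemma cvg_Fq (R : realType) N (A : 'M[R]_N) (b : 'cV[R]_N) (u : nat -> 'cV[R]_N) (v : 'cV[R]_N) :
  u @ \oo --> v -> (fun k => Fq A b (u k)) @ \oo --> Fq A b v.
Proof.
move=> hu; rewrite /Fq /Qf.
apply: cvgB; last by apply: cvg_entry; apply: cvg_mulmx; [exact: cvg_cst | exact: hu].
apply: cvgM; last exact: cvg_cst.
apply: cvg_entry; apply: cvg_mulmx; last exact: hu.
apply: cvg_mulmx; [exact: cvg_trmx | exact: cvg_cst].
Qed.

Lemma cs_bound (R : realType) N (A : 'M[R]_N) (x y : 'cV[R]_N) :
  A^T = A -> PD A -> ((x^T *m A *m y) 0 0) ^+ 2 <= Qf A x * Qf A y.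
Proof.
move=> As hA.
have [->|ny] := eqVneq y 0.
  by rewrite /Qf !mulmx0 !mxE mulr0 expr2 mulr0.
have qy := hA y ny; rewrite -/(Qf A y) in qy.
set s := (x^T *m A *m y) 0 0.
have sym : (y^T *m A *m x) 0 0 = s.
  have e : (y^T *m A *m x)^T = x^T *m A *m y by rewrite !trmx_mul trmxK As mulmxA.
  by rewrite /s -e [RHS]mxE.
set t := s / Qf A y.
have hts : t * Qf A y = s by rewrite /t mulfVK // gt_eqF.
have h := Qf_ge0 (x - t *: y) hA.
have ent : forall X Y : 'M[R]_1, (X - Y) 0 0 = X 0 0 - Y 0 0 by move=> X Y; rewrite !mxE.
have entZ : forall (c : R) (X : 'M[R]_1), (c *: X) 0 0 = c * X 0 0 by move=> c X; rewrite !mxE.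
move: h; rewrite /Qf [(x - t *: y)^T]linearB /= !(mulmxBl, mulmxBr) ![(t *: y)^T]linearZ /= -!scalemxAl -!scalemxAr !ent !entZ.
rewrite sym -/s -/(Qf A x) -/(Qf A y) => h.
nra.
Qed.

Lemma PD_unit (R : realType) N (A : 'M[R]_N) : PD A -> A \in unitmx.
Proof.
move=> hA; rewrite unitmxE unitfE; apply/negP => /det0P [v vn0 vA].
have vT : v^T != 0 by rewrite -(inj_eq (@trmx_inj _ _ _)) trmxK linear0.
by have := hA _ vT; rewrite trmxK vA mul0mx mxE ltxx.
Qed.

Lemma entry_bound (R : realType) N (A : 'M[R]_N) (x : 'cV[R]_N) i :
  A^T = A -> PD A -> (x i 0) ^+ 2 <= Qf A x * Qf A (invmx A *m delta_mx i 0).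
Proof.
move=> As hA.
have e : (x^T *m A *m (invmx A *m (delta_mx i 0 : 'cV[R]_N))) 0 0 = x i 0.
  rewrite -mulmxA (mulmxA A) mulmxV ?PD_unit // mul1mx -colE mxE mxE //.
by rewrite -{1}e; apply: cs_bound.
Qed.

Lemma sq_cvg0 (R : realType) (a : nat -> R) :
  (fun k => a k ^+ 2) @ \oo --> 0 -> a @ \oo --> 0.
Proof.
move=> h; apply/cvgr0Pnorm_lt => e e0.
have e2 : 0 < e ^+ 2 by rewrite exprn_gt0.
move/cvgr0Pnorm_lt: h => /(_ _ e2); apply: filterS => k.
rewrite normrX => hk.
have := normr_ge0 (a k); nra.
Qed.

Lemma cvg0_of_Qf (R : realType) N (A : 'M[R]_N) (d : nat -> 'cV[R]_N) :
  A^T = A -> PD A -> (fun k => Qf A (d k)) @ \oo --> 0 -> d @ \oo --> (0 : 'cV[R]_N).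
Proof.
move=> As hA h; apply: cvg_mx_entries => i j; rewrite (ord1 j) mxE.
apply: sq_cvg0.
set C := Qf A (invmx A *m delta_mx i 0).
apply: (squeeze_cvgr (f := fun=> 0) (h := fun k => Qf A (d k) * C)).
- by apply: nearW => k; rewrite sqr_ge0 /=; exact: entry_bound.
- exact: cvg_cst.
- by rewrite -(mul0r C); apply: cvgM => //; exact: cvg_cst.
Qed.

Lemma partial0 (R : realType) L N (n : 'I_L -> nat) (U : alspoint R n -> 'cV[R]_N)
  (A : 'M[R]_N) (b : 'cV[R]_N) p : als_partial U A b p 0 = p.
Proof. by rewrite /als_partial take0. Qed.

Lemma partialS (R : realType) L N (n : 'I_L -> nat) (U : alspoint R n -> 'cV[R]_N)
  (A : 'M[R]_N) (b : 'cV[R]_N) p mu (h : (mu < L)%N) :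
  als_partial U A b p mu.+1 = als_update U A b (als_partial U A b p mu) (Ordinal h).
Proof.
rewrite /als_partial (take_nth (Ordinal h)) ?size_enum_ord // -cats1 foldl_cat /=.
congr als_update; apply: val_inj; by rewrite /= nth_enum_ord.
Qed.

Lemma partial_mono (R : realType) L N (n : 'I_L -> nat) (U : alspoint R n -> 'cV[R]_N)
  (A : 'M[R]_N) (b : 'cV[R]_N) p :
  multilinear U -> A^T = A -> PD A ->
  forall i j, (i <= j <= L)%N ->
  Fq A b (U (als_partial U A b p j)) <= Fq A b (U (als_partial U A b p i)).
Proof.
move=> hU As hA i j; elim: j => [|j IH].
  by rewrite leqn0 => /andP [/eqP -> _].
move=> /andP [hij hjL].
rewrite leq_eqVlt in hij; case/orP: hij => [/eqP -> //|hij].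
have hj : (j < L)%N by [].
apply: le_trans (IH _); last by rewrite -ltnS hij ltnW.
rewrite (partialS _ _ _ _ hj).
have := step_dec b (als_partial U A b p j) (Ordinal hj) hU As hA.
have := Qf_ge0 (U (als_partial U A b p j) - U (als_update U A b (als_partial U A b p j) (Ordinal hj))) hA.
lra.
Qed.

Lemma main_gen (R : realType) L N (n : 'I_L -> nat) (A : 'M[R]_N) (b : 'cV[R]_N)
  (U : alspoint R n -> 'cV[R]_N) (p1 : alspoint R n) (vbar : 'cV[R]_N) :
  A^T = A -> PD A -> multilinear U ->
  (fun k => U (als_iter U A b p1 k)) @ \oo --> vbar ->
  forall m, (m <= L)%N ->
  (fun k => U (als_partial U A b (als_iter U A b p1 k) m)) @ \oo --> vbar.
Proof.
move=> As hA hU hcv.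
have vS : forall k, als_iter U A b p1 k.+1 = als_partial U A b (als_iter U A b p1 k) L.
  by move=> k; rewrite /als_iter iterS.
have hf : (fun k => Fq A b (U (als_iter U A b p1 k)) - Fq A b (U (als_iter U A b p1 k.+1)))
    @ \oo --> 0.
  rewrite -(subrr (Fq A b vbar)); apply: cvgB; first exact: cvg_Fq.
  have := @cvg_Fq _ _ A b _ _ hcv.
  by rewrite -(cvg_shiftS (fun k => Fq A b (U (als_iter U A b p1 k)))).
elim=> [|m IH] hm.
  by under eq_fun do rewrite partial0.
have hmL : (m < L)%N by [].
set d := fun k => U (als_partial U A b (als_iter U A b p1 k) m) -
                  U (als_partial U A b (als_iter U A b p1 k) m.+1).
have hd : d @ \oo --> (0 : 'cV[R]_N).
  apply (cvg0_of_Qf As hA).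
  apply: (squeeze_cvgr (f := fun=> 0)
    (h := fun k => 2 * (Fq A b (U (als_iter U A b p1 k)) - Fq A b (U (als_iter U A b p1 k.+1))))).
  - apply: nearW => k /=; rewrite Qf_ge0 //=.
    have e := step_dec b (als_partial U A b (als_iter U A b p1 k) m) (Ordinal hmL) hU As hA.
    rewrite -(partialS _ _ _ _ hmL) in e.
    have m1 := partial_mono b (als_iter U A b p1 k) hU As hA (i := 0) (j := m) (ltnW hm).
    have m2 := partial_mono b (als_iter U A b p1 k) hU As hA (i := m.+1) (j := L).
    rewrite hm leqnn /= in m2; have {}m2 := m2 isT.
    rewrite partial0 in m1; rewrite -vS in m2.
    rewrite /d; lra.
  - exact: cvg_cst.
  - rewrite -(mulr0 2); apply: cvgM; [exact: cvg_cst | exact: hf].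
have -> : (fun k => U (als_partial U A b (als_iter U A b p1 k) m.+1)) =
          (fun k => U (als_partial U A b (als_iter U A b p1 k) m) - d k).
  by apply: funext => k; rewrite /d opprB addrCA subrr addr0.
rewrite -[vbar]subr0; apply: cvgB; [exact: IH (ltnW hm) | exact: hd].
Qed.

Unset Implicit Arguments.

Theorem mainTheorem13 (R : realType) (d : nat) (m : 'I_d -> nat) (L : nat)
  (n : 'I_L -> nat)
  (A : 'M[R]_(\prod_(nu < d) m nu)) (b : 'cV[R]_(\prod_(nu < d) m nu))
  (U : alspoint R n -> 'cV[R]_(\prod_(nu < d) m nu))
  (p1 : alspoint R n) (vbar : 'cV[R]_(\prod_(nu < d) m nu)) :
  (d <= L)%N ->
  A^T = A ->
  (forall x : 'cV[R]_(\prod_(nu < d) m nu), x != 0 -> 0 < (x^T *m A *m x) 0 0) ->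
  b != 0 ->
  multilinear U ->
  (fun k => U (als_iter U A b p1 k)) @ \oo --> vbar ->
  forall mu : 'I_L.+1,
    (fun k => U (als_partial U A b (als_iter U A b p1 k) mu)) @ \oo --> vbar.
Proof.
move=> _ As hA _ hU hcv mu.
exact: (main_gen As hA hU hcv (ltn_ord mu)).
Qed.
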